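(* Let $E$ be an almost finitely generated $R$-module and $R\to T$ a ring morphism. Then $E\otimes_RT$ is an almost finitely generated $T$-module.
   Context: Rings are commutative and unital. An $A$-module $E$ is almost finitely generated (afg) over $A$ if there is a ring morphism $A\to S$ such that $E$ is a finitely generated $S$-module whose induced $A$-module structure is the original one. *)

(* Defs.v *)
From HB Require Import structures.
From mathcomp Require Import all_boot all_order all_algebra.
Set Implicit Arguments. Unset Strict Implicit. Unset Printing Implicit Defensive.
Import GRing.Theory.
Local Open Scope ring_scope.

Definition module_action (S : pzRingType) (V : zmodType) (act : S -> V -> V) : Prop :=
  [/\ forall v, act 1 v = v,
      forall a b v, act a (act b v) = act (a * b) v,
      forall a b v, act (a + b) v = act a v + act b v
    & forall a u v, act a (u + v) = act a u + act a v].

Definition fin_gen_action (S : pzRingType) (V : zmodType) (act : S -> V -> V) : Prop :=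
  exists (n : nat) (xs : 'I_n -> V),
    forall v, exists cs : 'I_n -> S, v = \sum_(i < n) act (cs i) (xs i).

Definition afg (A : comPzRingType) (E : lmodType A) : Prop :=
  exists (S : comPzRingType) (f : {rmorphism A -> S}) (act : S -> E -> E),
    [/\ module_action act,
        forall (a : A) (x : E), act (f a) x = a *: x
      & fin_gen_action act].

(* (F, b) is the tensor product E (x)_R T, with b x t = x (x) t, together with
   its natural T-module structure t' (x (x) t) = x (x) (t' t). *)
Definition is_tensor_product (R T : comPzRingType) (phi : {rmorphism R -> T})
    (E : lmodType R) (F : lmodType T) (b : E -> T -> F) : Prop :=
  [/\ (forall x y t, b (x + y) t = b x t + b y t)
      /\ (forall x t u, b x (t + u) = b x t + b x u),
      (forall (r : R) x t, b (r *: x) t = phi r *: b x t)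
      /\ (forall (r : R) x t, b x (phi r * t) = phi r *: b x t),
      (forall (s : T) x t, s *: b x t = b x (s * t))
    & forall (G : lmodType R) (c : E -> T -> G),
        (forall x y t, c (x + y) t = c x t + c y t) ->
        (forall x t u, c x (t + u) = c x t + c x u) ->
        (forall (r : R) x t, c (r *: x) t = r *: c x t) ->
        (forall (r : R) x t, c x (phi r * t) = r *: c x t) ->
        exists g : F -> G,
          [/\ (forall u v, g (u + v) = g u + g v),
              (forall (r : R) v, g (phi r *: v) = r *: g v),
              (forall x t, g (b x t) = c x t)
            & forall g' : F -> G,
                (forall u v, g' (u + v) = g' u + g' v) ->
                (forall (r : R) v, g' (phi r *: v) = r *: g' v) ->
                (forall x t, g' (b x t) = c x t) ->
                forall v, g' v = g v]].

(* Main.v *)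
Require Import Defs.
From HB Require Import structures.
From mathcomp Require Import all_boot all_order all_algebra.
From mathcomp Require Import boolp.
Set Implicit Arguments. Unset Strict Implicit. Unset Printing Implicit Defensive.
Import GRing.Theory.
Local Open Scope ring_scope.

Definition addf (U V : zmodType) (k : U -> V) := forall u v, k (u + v) = k u + k v.

Lemma addf0 (U V : zmodType) (k : U -> V) : addf k -> k 0 = 0.
Proof. by move=> H; apply: (@addrI _ (k 0)); rewrite -H !addr0. Qed.

Lemma addfN (U V : zmodType) (k : U -> V) : addf k -> forall v, k (- v) = - k v.
Proof. move=> H v; apply: (@addIr _ (k v)); by rewrite -H !addNr addf0. Qed.

Lemma addf_sum (U V : zmodType) (k : U -> V) n (F : 'I_n -> U) : addf k ->
  k (\sum_(i < n) F i) = \sum_(i < n) k (F i).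
Proof. by move=> H; apply: (big_morph k H (addf0 H)). Qed.

Section Tens.
Variables (R T : comPzRingType) (phi : {rmorphism R -> T}) (E : lmodType R)
  (F : lmodType T) (b : E -> T -> F).
Hypothesis Htp : is_tensor_product phi b.

Definition FR : Type := F.
HB.instance Definition _ := GRing.Zmodule.on FR.
Definition scaleFR (r : R) (v : FR) : FR := (phi r *: (v : F)).
Lemma scaleFR_A a c v : scaleFR a (scaleFR c v) = scaleFR (a * c) v.
Proof. by rewrite /scaleFR scalerA rmorphM. Qed.
Lemma scaleFR_1 : left_id 1 scaleFR.
Proof. by move=> v; rewrite /scaleFR rmorph1 scale1r. Qed.
Lemma scaleFR_Dr : right_distributive scaleFR +%R.
Proof. by move=> a u v; rewrite /scaleFR scalerDr. Qed.
Lemma scaleFR_Dl v : {morph scaleFR^~ v: a c / a + c}.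
Proof. by move=> a c; rewrite /scaleFR rmorphD scalerDl. Qed.
HB.instance Definition _ := GRing.Zmodule_isLmodule.Build R FR
  scaleFR_A scaleFR_1 scaleFR_Dr scaleFR_Dl.

Lemma tens_ext (G : lmodType R) (k1 k2 : F -> G) :
  addf k1 -> addf k2 ->
  (forall r v, k1 (phi r *: v) = r *: k1 v) ->
  (forall r v, k2 (phi r *: v) = r *: k2 v) ->
  (forall x t, k1 (b x t) = k2 (b x t)) -> forall v, k1 v = k2 v.
Proof.
have [[bD1 bD2] [bZ1 bZ2] bT U] := Htp; move=> A1 A2 L1 L2 E12.
have H1 : forall x y t, k1 (b (x + y) t) = k1 (b x t) + k1 (b y t).
  by move=> x y t; rewrite bD1 A1.
have H2 : forall x t u, k1 (b x (t + u)) = k1 (b x t) + k1 (b x u).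
  by move=> x t u; rewrite bD2 A1.
have H3 : forall (r : R) x t, k1 (b (r *: x) t) = r *: k1 (b x t).
  by move=> r x t; rewrite bZ1 L1.
have H4 : forall (r : R) x t, k1 (b x (phi r * t)) = r *: k1 (b x t).
  by move=> r x t; rewrite bZ2 L1.
have [g [_ _ _ gU]] := U G (fun x t => k1 (b x t)) H1 H2 H3 H4.
move=> v; rewrite (gU k1) // (gU k2) //.
Qed.


Lemma scaleFRE (r : R) (v : FR) : r *: v = (phi r *: (v : F) : FR).
Proof. by []. Qed.

Variables (S : comPzRingType) (f : {rmorphism R -> S}) (act : S -> E -> E).
Hypothesis Hact : module_action act.
Hypothesis Hf : forall (a : R) (x : E), act (f a) x = a *: x.

Lemma gs_ex s : exists g : F -> F, [/\ addf g, forall t v, g (t *: v) = t *: g v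
   & forall x t, g (b x t) = b (act s x) t].
Proof.
have [[bD1 bD2] [bZ1 bZ2] bT U] := Htp.
have [a1 aM aD1 aD2] := Hact.
have H1 : forall x y t, (b (act s (x + y)) t : FR) = b (act s x) t + b (act s y) t.
  by move=> x y t; rewrite aD2 bD1.
have H2 : forall x t u, (b (act s x) (t + u) : FR) = b (act s x) t + b (act s x) u.
  by move=> x t u; rewrite bD2.
have H3 : forall (r : R) x t, (b (act s (r *: x)) t : FR) = r *: (b (act s x) t : FR).
  move=> r x t; rewrite scaleFRE -bZ1 -!Hf !aM; congr (b (act _ x) t).
  by rewrite mulrC.
have H4 : forall (r : R) x t, (b (act s x) (phi r * t) : FR) = r *: (b (act s x) t : FR).
  by move=> r x t; rewrite scaleFRE bZ2.
have [g [gD gR gb _]] := U FR (fun x t => (b (act s x) t : FR)) H1 H2 H3 H4.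
exists g; split => //.
move=> t; apply: (@tens_ext FR (fun v => g (t *: v)) (fun v => t *: g v)).
- by move=> u v; rewrite scalerDr gD.
- by move=> u v; rewrite gD scalerDr.
- by move=> r v; rewrite scalerA mulrC -scalerA gR.
- by move=> r v; rewrite gR !scaleFRE scalerA mulrC -scalerA.
- by move=> x u; rewrite bT !gb bT.
Qed.

Definition gs s : F -> F := proj1_sig (cid (gs_ex s)).
Lemma gsD s : addf (gs s).
Proof. by rewrite /gs; case: cid => g [] . Qed.
Lemma gsT s t v : gs s (t *: v) = t *: gs s v.
Proof. by rewrite /gs; case: cid => g [] . Qed.
Lemma gsb s x t : gs s (b x t) = b (act s x) t.
Proof. by rewrite /gs; case: cid => g [] . Qed.

Lemma gs_mul s s' v : gs s (gs s' v) = gs (s * s') v.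
Proof.
have [a1 aM aD1 aD2] := Hact.
apply: (@tens_ext FR (fun v => gs s (gs s' v)) (gs (s * s'))).
- by move=> u w; rewrite !gsD.
- exact: gsD.
- by move=> r w; rewrite !gsT.
- by move=> r w; rewrite gsT.
- by move=> x t; rewrite !gsb aM.
Qed.

Lemma gs_comm s s' v : gs s (gs s' v) = gs s' (gs s v).
Proof. by rewrite !gs_mul mulrC. Qed.


Definition inC (k : F -> F) :=
  [/\ addf k, forall t v, k (t *: v) = t *: k v & forall s v, k (gs s v) = gs s (k v)].
Definition inP (h : F -> F) := addf h /\ forall k, inC k -> forall v, h (k v) = k (h v).

Record Sp := MkSp { spf :> F -> F ; spP : inP spf }.

Lemma Sp_eq (a c : Sp) : (forall v, a v = c v) -> a = c.
Proof.
case: a c => a Pa [c Pc] /= /funext E'; subst c; congr MkSp; exact: Prop_irrelevance.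
Qed.

HB.instance Definition _ := gen_eqMixin Sp.
HB.instance Definition _ := gen_choiceMixin Sp.

Lemma inC_scal t : inC (fun v => t *: v).
Proof.
split.
- by move=> u v; rewrite scalerDr.
- by move=> t' v; rewrite !scalerA mulrC.
- by move=> s v; rewrite gsT.
Qed.
Lemma inC_gs s : inC (gs s).
Proof. split; [exact: gsD | exact: gsT | by move=> s' v; rewrite gs_comm]. Qed.

Lemma inP0 : inP (fun _ => 0).
Proof. split; first by move=> u v /=; rewrite addr0. by move=> k [kD _ _] v; rewrite addf0. Qed.
Lemma inPN (a : Sp) : inP (fun v => - a v).
Proof.
case: a => a [aD aC]; split; first by move=> u v /=; rewrite aD opprD.
move=> k Hk v /=; case: (Hk) => kD _ _; by rewrite addfN // (aC k Hk).
Qed.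
Lemma inPD (a c : Sp) : inP (fun v => a v + c v).
Proof.
case: a c => a [aD aC] [c [cD cC]]; split; first by move=> u v /=; rewrite aD cD addrACA.
move=> k Hk v /=; case: (Hk) => kD _ _; by rewrite kD (aC k Hk) (cC k Hk).
Qed.
Lemma inP1 : inP id.
Proof. by split. Qed.
Lemma inPM (a c : Sp) : inP (fun v => a (c v)).
Proof.
case: a c => a [aD aC] [c [cD cC]]; split; first by move=> u v /=; rewrite cD aD.
by move=> k Hk v /=; rewrite cC // aC.
Qed.

Definition sp0 := MkSp inP0.
Definition spN a := MkSp (inPN a).
Definition spD a c := MkSp (inPD a c).
Definition sp1 := MkSp inP1.
Definition spM a c := MkSp (inPM a c).

Lemma sp_addrA : associative spD.
Proof. by move=> a c d; apply: Sp_eq => v /=; rewrite addrA. Qed.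
Lemma sp_addrC : commutative spD.
Proof. by move=> a c; apply: Sp_eq => v /=; rewrite addrC. Qed.
Lemma sp_add0r : left_id sp0 spD.
Proof. by move=> a; apply: Sp_eq => v /=; rewrite add0r. Qed.
Lemma sp_addNr : left_inverse sp0 spN spD.
Proof. by move=> a; apply: Sp_eq => v /=; rewrite addNr. Qed.
HB.instance Definition _ := GRing.isZmodule.Build Sp sp_addrA sp_addrC sp_add0r sp_addNr.

Lemma inC_Sp (a : Sp) : inC a.
Proof.
case: a => a [aD aC]; split => //.
- by move=> t v /=; rewrite aC //; exact: inC_scal.
- by move=> s v /=; rewrite aC //; exact: inC_gs.
Qed.

Lemma sp_mulrA : associative spM.
Proof. by move=> a c d; apply: Sp_eq. Qed.
Lemma sp_mulrC : commutative spM.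
Proof.
move=> a c; apply: Sp_eq => v /=; case: a => a [aD aC] /=; exact: aC (inC_Sp c) v.
Qed.
Lemma sp_mul1r : left_id sp1 spM.
Proof. by move=> a; apply: Sp_eq. Qed.
Lemma sp_mulrDl : left_distributive spM spD.
Proof. by move=> a c d; apply: Sp_eq. Qed.
HB.instance Definition _ := GRing.Zmodule_isComPzRing.Build Sp
  sp_mulrA sp_mulrC sp_mul1r sp_mulrDl.

Lemma inP_scal t : inP (fun v => t *: v).
Proof. split; first by move=> u v /=; rewrite scalerDr. by move=> k [_ kT _] v; rewrite kT. Qed.
Definition Tm t : Sp := MkSp (inP_scal t).

Lemma Tm_zmod : zmod_morphism Tm.
Proof. by move=> t u; apply: Sp_eq => v /=; rewrite scalerBl. Qed.
Lemma Tm_monoid : monoid_morphism Tm.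
Proof. split; first by apply: Sp_eq => v /=; rewrite scale1r.
by move=> t u; apply: Sp_eq => v /=; rewrite scalerA. Qed.
HB.instance Definition _ := GRing.isZmodMorphism.Build T Sp Tm Tm_zmod.
HB.instance Definition _ := GRing.isMonoidMorphism.Build T Sp Tm Tm_monoid.

Definition actS (h : Sp) (v : F) : F := h v.

Lemma actS_module : module_action actS.
Proof.
split => //.
move=> a u v; rewrite /actS; case: a => a [aD _] /=; exact: aD.
Qed.


Lemma inP_gs s : inP (gs s).
Proof. split; [exact: gsD | by move=> k [_ _ kg] v; rewrite kg]. Qed.
Definition GS s : Sp := MkSp (inP_gs s).

Variables (n : nat) (xs : 'I_n -> E).
Hypothesis Hfg : forall v, exists cs : 'I_n -> S, v = \sum_(i < n) act (cs i) (xs i).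

Definition xs' i := b (xs i) 1.
Definition inM (v : F) := exists cs : 'I_n -> Sp, v = \sum_(i < n) cs i (xs' i).
Record M := MkM { mv :> FR ; mvP : inM mv }.

Lemma M_eq (a c : M) : mv a = mv c -> a = c.
Proof. case: a c => a Pa [c Pc] /= E'; subst c; congr MkM; exact: Prop_irrelevance. Qed.

HB.instance Definition _ := gen_eqMixin M.
HB.instance Definition _ := gen_choiceMixin M.

Lemma inM0 : inM 0.
Proof. by exists (fun _ => 0); rewrite big1. Qed.
Lemma inMN (a : M) : inM (- (mv a : F)).
Proof.
case: a => a Pa /=; case: Pa => cs ->; exists (fun i => - cs i); rewrite -sumrN.
by apply: eq_bigr.
Qed.
Lemma inMD (a c : M) : inM ((mv a : F) + (mv c : F)).
Proof.
case: a c => a Pa [c Pc] /=; case: Pa Pc => cs -> [ds ->]; exists (fun i => cs i + ds i).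
by rewrite -big_split.
Qed.
Lemma inMZ (r : R) (a : M) : inM (phi r *: (mv a : F)).
Proof.
case: a => a Pa /=; case: Pa => cs ->; exists (fun i => Tm (phi r) * cs i).
by rewrite scaler_sumr.
Qed.

Definition m0 := MkM inM0.
Definition mN a := MkM (inMN a).
Definition mD a c := MkM (inMD a c).
Definition mZ r a := MkM (inMZ r a).

Lemma m_addrA : associative mD.
Proof. by move=> a c d; apply: M_eq => /=; rewrite addrA. Qed.
Lemma m_addrC : commutative mD.
Proof. by move=> a c; apply: M_eq => /=; rewrite addrC. Qed.
Lemma m_add0r : left_id m0 mD.
Proof. by move=> a; apply: M_eq => /=; rewrite add0r. Qed.
Lemma m_addNr : left_inverse m0 mN mD.
Proof. by move=> a; apply: M_eq => /=; rewrite addNr. Qed.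
HB.instance Definition _ := GRing.isZmodule.Build M m_addrA m_addrC m_add0r m_addNr.

Lemma mZ_A a c v : mZ a (mZ c v) = mZ (a * c) v.
Proof. by apply: M_eq => /=; rewrite scalerA rmorphM. Qed.
Lemma mZ_1 : left_id 1 mZ.
Proof. by move=> v; apply: M_eq => /=; rewrite rmorph1 scale1r. Qed.
Lemma mZ_Dr : right_distributive mZ +%R.
Proof. by move=> a u v; apply: M_eq => /=; rewrite scalerDr. Qed.
Lemma mZ_Dl v : {morph mZ^~ v: a c / a + c}.
Proof. by move=> a c; apply: M_eq => /=; rewrite rmorphD scalerDl. Qed.
HB.instance Definition _ := GRing.Zmodule_isLmodule.Build R M mZ_A mZ_1 mZ_Dr mZ_Dl.

Lemma inMb x t : inM (b x t).
Proof.
have [[bD1 bD2] [bZ1 bZ2] bT U] := Htp.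
have [cs ->] := Hfg x.
exists (fun i => Tm t * GS (cs i)).
have bDa : addf (fun y => b y 1) by move=> u v; rewrite bD1.
rewrite -[t]mulr1 -bT (addf_sum _ bDa) scaler_sumr mulr1.
by apply: eq_bigr => i _ /=; rewrite gsb.
Qed.

Lemma afgF : afg F.
Proof.
exists [the comPzRingType of Sp], [the {rmorphism T -> Sp} of Tm], actS.
split; [exact: actS_module | by [] |].
exists n, xs' => v.
have [[bD1 bD2] [bZ1 bZ2] bT U] := Htp.
pose c x t := MkM (inMb x t).
have H1 : forall x y t, c (x + y) t = c x t + c y t.
  by move=> x y t; apply: M_eq => /=; rewrite bD1.
have H2 : forall x t u, c x (t + u) = c x t + c x u.
  by move=> x t u; apply: M_eq => /=; rewrite bD2.
have H3 : forall (r : R) x t, c (r *: x) t = r *: c x t.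
  by move=> r x t; apply: M_eq => /=; rewrite bZ1.
have H4 : forall (r : R) x t, c x (phi r * t) = r *: c x t.
  by move=> r x t; apply: M_eq => /=; rewrite bZ2.
have [g [gD gR gb _]] := U M c H1 H2 H3 H4.
have -> : v = mv (g v).
  apply: (@tens_ext FR id (fun v => mv (g v))) => //.
  - by move=> u w; rewrite gD.
  - by move=> r w; rewrite gR.
  - by move=> x t; rewrite gb.
case: (g v) => w Pw /=; case: Pw => cs ->; by exists cs.
Qed.

End Tens.

Theorem proposition4p3 (R T : comPzRingType) (phi : {rmorphism R -> T})
    (E : lmodType R) (F : lmodType T) (b : E -> T -> F) :
  afg E -> is_tensor_product phi b -> afg F.
Proof.
move=> [S [f [act [Hact Hf [n [xs Hfg]]]]]] Htp.
exact: (afgF Htp Hact Hf Hfg).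
Qed.
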